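(* Let $\mu = (\mu_1,\mu_2,\ldots,\mu_n)$, $k = \sum_{i=1}^n \mu_i$, and $n = \sum_{i=1}^n i\mu_i$. Let $d$ be a positive integer such that $d \mid (n+2)$, and let $\zeta_d$ be a primitive $d$-th root of unity. \begin{enumerate} \item If there is one index $j$ such that $\mu_j \equiv 1 \pmod{d}$ and $\mu_i \equiv 0 \pmod{d}$ for all $i \neq j$, then \[ a_\mu(\zeta_d) = \binom{\frac{n+2}{d} + \frac{k-1}{d} - 1}{\frac{k-1}{d}} \binom{\frac{k-1}{d}}{\lfloor \frac{\mu_1}{d}\rfloor, \lfloor \frac{\mu_2}{d}\rfloor, \ldots, \lfloor \frac{\mu_n}{d}\rfloor} . \] \item If $d = 2$ and all $\mu_i$ are even, then \[ a_\mu(\zeta_{2}) = a_\mu(-1) = \binom{\frac{n+k}{2}}{\frac{k}{2}}\binom{\frac{k}{2}}{\frac{\mu_1}{2},\frac{\mu_2}{2},\ldots,\frac{\mu_n}{2}}. \] \item If $\mu$ satisfies neither (a) there is exactly one index $j$ with $\mu_j \equiv 1 \pmod{d}$ and $\mu_i \equiv 0 \pmod{d}$ for all $i \neq j$, nor (b) $d = 2$ and all $\mu_i$ are even, then $a_\mu(\zeta_d) = 0$. \end{enumerate}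
   Context: $a_\mu(q) = \frac{1}{[n+1]_q} \left[\begin{smallmatrix} n+k \\ k\end{smallmatrix}\right]_q \left[\begin{smallmatrix} k \\ \mu_1,\mu_2,\ldots,\mu_n\end{smallmatrix}\right]_q$, the naive $q$-analogue of $a_\mu = \frac{1}{n+1}\binom{n+k}{k}\binom{k}{\mu_1,\ldots,\mu_n}$, where $[\cdot]_q$ denotes $q$-integers and the bracketed expressions are $q$-binomial and $q$-multinomial coefficients. *)

(* Defs.v *)
From mathcomp Require Import all_boot all_order all_algebra all_field.
Set Implicit Arguments. Unset Strict Implicit. Unset Printing Implicit Defensive.
Import Order.TTheory GRing.Theory Num.Theory.
Local Open Scope ring_scope.

Section QAnalogues.
Variable R : fieldType.

Definition qint (m : nat) : {poly R} := \sum_(i < m) 'X^i.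

Definition qfact (m : nat) : {poly R} := \prod_(i < m) qint i.+1.

Definition qbinom (m j : nat) : {poly R} := qfact m %/ (qfact j * qfact (m - j)).

Definition qmultinom (k : nat) (n : nat) (mu : 'I_n -> nat) : {poly R} :=
  qfact k %/ \prod_(i < n) qfact (mu i).

Definition a_mu (n : nat) (mu : 'I_n -> nat) (x : R) : R :=
  let k := (\sum_(i < n) mu i)%N in
  (qbinom (n + k) k).[x] * (qmultinom k mu).[x] / (qint n.+1).[x].

End QAnalogues.

Definition multinomn (k : nat) (n : nat) (s : 'I_n -> nat) : nat :=
  (k`! %/ \prod_(i < n) (s i)`!)%N.

(* Main.v *)
Require Import Defs.
From mathcomp Require Import all_boot all_order all_algebra all_field.
From mathcomp Require Import ring zify.
Import GRing.Theory Num.Theory.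
Local Open Scope ring_scope.



Section Q.
Variable R : fieldType.

Fixpoint qb (m j : nat) : {poly R} :=
  match m, j with
  | _, 0 => 1
  | 0, _.+1 => 0
  | m'.+1, j'.+1 => qb m' j' + 'X^(j'.+1) * qb m' j'.+1
  end.

Lemma qint_add a b : qint R (a + b) = qint R a + 'X^a * qint R b.
Proof.
rewrite /qint big_split_ord /=; congr (_ + _).
rewrite mulr_sumr; apply: eq_bigr => i _; by rewrite exprD.
Qed.

Lemma qint0 : qint R 0 = 0. Proof. by rewrite /qint big_ord0. Qed.
Lemma qint1 : qint R 1 = 1. Proof. by rewrite /qint big_ord1 expr0. Qed.

Lemma qintS m : qint R m.+1 = qint R m + 'X^m.
Proof. by rewrite -addn1 qint_add qint1 mulr1. Qed.

Lemma qintSl m : qint R m.+1 = 1 + 'X * qint R m.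
Proof. by rewrite -add1n qint_add qint1 expr1. Qed.

Lemma qfact0 : qfact R 0 = 1. Proof. by rewrite /qfact big_ord0. Qed.
Lemma qfactS m : qfact R m.+1 = qfact R m * qint R m.+1.
Proof. by rewrite /qfact big_ord_recr. Qed.

Lemma qb_m0 m : qb m 0 = 1. Proof. by case: m. Qed.

Lemma qb_gt m j : (m < j)%N -> qb m j = 0.
Proof.
elim: m j => [|m IH] [|j] //= H.
by rewrite !IH // ?mulr0 ?addr0 //; lia.
Qed.

Lemma qb_mm m : qb m m = 1.
Proof. by elim: m => //= m ->; rewrite qb_gt // mulr0 addr0. Qed.

Lemma qb_m1 m : qb m 1 = qint R m.
Proof. elim: m => [|m IH] /=; first by rewrite qint0. by rewrite qb_m0 IH qintSl expr1. Qed.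

Lemma qb_fact m j : (j <= m)%N -> qfact R m = qb m j * (qfact R j * qfact R (m - j)).
Proof.
elim: m j => [|m IH] [|j] //= H.
- by rewrite qfact0 !mulr1.
- by rewrite qfact0 !mul1r subn0.
rewrite qfactS.
have E1 := IH j H.
have [Hjm|Hjm] := ltnP j m; last first.
  have Ej : j = m by lia.
  subst j. rewrite (@qb_gt m m.+1) // mulr0 addr0 subSS subnn qfactS qfact0 mulr1.
  rewrite (IH m) // subnn qfact0 mulr1 qb_mm mul1r. by rewrite mul1r.
have E2 := IH j.+1 Hjm.
have Hs : (m.+1 - j.+1 = (m - j.+1).+1)%N by lia.
rewrite Hs qfactS.
have Hs2 : (m - j.+1).+1 = (m - j)%N by lia.
rewrite Hs2.
have Hq : qint R m.+1 = qint R j.+1 + 'X^(j.+1) * qint R (m - j).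
  by rewrite -qint_add; congr qint; lia.
rewrite Hq.
transitivity ((qb m j * (qfact R j * qfact R (m - j))) * qint R j.+1 +
   'X^(j.+1) * (qb m j.+1 * (qfact R j.+1 * qfact R (m - j.+1))) * qint R (m - j)).
  by rewrite -E1 -E2; ring.
rewrite (qfactS j) -Hs2 qfactS Hs2; ring.
Qed.

Lemma qint_h0 m : (qint R m.+1).[0] = 1.
Proof. by rewrite qintSl hornerD hornerC hornerM hornerX mul0r addr0. Qed.

Lemma qfact_h0 m : (qfact R m).[0] = 1.
Proof. elim: m => [|m IH]; first by rewrite qfact0 hornerC. by rewrite qfactS hornerM IH qint_h0 mulr1. Qed.

Lemma qfact_neq0 m : qfact R m != 0.
Proof. apply/negP => /eqP H. have := qfact_h0 m. by rewrite H horner0 => /eqP; rewrite eq_sym oner_eq0. Qed.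

Lemma qbinomE m j : (j <= m)%N -> qbinom R m j = qb m j.
Proof.
move=> H; by rewrite /qbinom (@qb_fact m j H) mulpK // mulf_neq0 // qfact_neq0.
Qed.

End Q.



Section Z.
Variable R : fieldType.
Variable d : nat.
Variable z : R.
Hypothesis Hd : (1 < d)%N.
Hypothesis Hz : d.-primitive_root z.

Lemma qint_h m : (qint R m).[z] * (1 - z) = 1 - z ^+ m.
Proof.
elim: m => [|m IH]; first by rewrite qint0 horner0 mul0r expr0 subrr.
rewrite qintS hornerD hornerXn mulrDl IH exprS; ring.
Qed.

Lemma z_neq1 : z != 1.
Proof. by rewrite -(expr1 z) -(prim_order_dvd Hz) dvdn1; lia. Qed.

Lemma omz_neq0 : 1 - z != 0.
Proof. by rewrite subr_eq0 eq_sym z_neq1. Qed.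

Lemma qint_mod m : (qint R m).[z] = (qint R (m %% d)%N).[z].
Proof.
apply: (mulIf omz_neq0); by rewrite !qint_h (prim_expr_mod Hz).
Qed.

Lemma qint_neq0 m : ~~ (d %| m)%N -> (qint R m).[z] != 0.
Proof.
move=> H; apply/negP => /eqP H0.
have := qint_h m; rewrite H0 mul0r => /eqP; rewrite eq_sym subr_eq0 eq_sym.
by rewrite -(prim_order_dvd Hz) (negbTE H).
Qed.

Lemma qint_d0 : (qint R d).[z] = 0.
Proof.
apply: (mulIf omz_neq0); by rewrite qint_h mul0r (prim_expr_order Hz) subrr.
Qed.

Lemma qfact_nz s : (s < d)%N -> (qfact R s).[z] != 0.
Proof.
elim: s => [|s IH] H; first by rewrite qfact0 hornerC oner_eq0.
rewrite qfactS hornerM mulf_neq0 ?IH //; first lia.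
apply: qint_neq0; apply/negP => /(dvdn_leq (ltn0Sn _)); lia.
Qed.

Lemma qb_d0 s : (0 < s < d)%N -> (qb R d s).[z] = 0.
Proof.
case/andP => H1 H2.
have := @qb_fact R d s (ltnW H2).
have Hd1 : d = (d.-1).+1 by lia.
move/(congr1 (fun p => p.[z])).
rewrite {1}Hd1 qfactS -Hd1 hornerM qint_d0 mulr0 !hornerM => /esym /eqP.
have N1 := @qfact_nz s H2.
have N2 : (qfact R (d - s)).[z] != 0 by apply: qfact_nz; lia.
by rewrite !mulf_eq0 (negbTE N1) (negbTE N2) !orbF => /eqP.
Qed.

Lemma zexp b s : z ^+ (b * d + s) = z ^+ s.
Proof. by rewrite exprD mulnC exprM (prim_expr_order Hz) expr1n mul1r. Qed.

Lemma lucas_gen m : forall j a r b s, (r < d)%N -> (s < d)%N -> m = (a * d + r)%N ->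
  j = (b * d + s)%N -> (qb R m j).[z] = ('C(a, b))%:R * (qb R r s).[z].
Proof.
elim: m => [|m IH] j a r b s Hr Hs Em Ej.
  have Ea : a = 0%N by nia.
  have Er : r = 0%N by nia.
  subst a r j.
  case: b => [|b]; first by rewrite mul0n add0n bin0 mul1r.
  have -> : 'C(0, b.+1) = 0%N by [].
  rewrite mul0r qb_gt ?horner0 //; nia.
case: j Ej => [|j] Ej.
  have Eb : b = 0%N by nia.
  have Es : s = 0%N by nia.
  by subst; rewrite !qb_m0 bin0 mul1r.
rewrite /= hornerD hornerM hornerXn Ej zexp -Ej.
have [Hr0|Hr0] := posnP r; have [Hs0|Hs0] := posnP s.
-
  try subst r; try subst s.
  have Ha : (0 < a)%N by nia.
  have Hb : (0 < b)%N by nia.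
  rewrite (IH j a.-1 d.-1 b.-1 d.-1) ?(IH j.+1 a.-1 d.-1 b (0%N)); try nia.
  rewrite qb_mm qb_m0 expr0 !hornerC !mulr1 mul1r -natrD addnC.
  have -> : b = b.-1.+1 by lia.
  by rewrite -binS prednK.
-
  try subst r.
  have Ha : (0 < a)%N by nia.
  rewrite (IH j a.-1 d.-1 b s.-1) ?(IH j.+1 a.-1 d.-1 b s); try nia.
  rewrite [(qb R 0 s)]qb_gt // horner0 mulr0.
  rewrite mulrCA -mulrDr.
  have Hd1 : d = (d.-1).+1 by lia.
  have H0 : (qb R d s).[z] = 0 by apply: qb_d0; lia.
  have Hs1 : s = (s.-1).+1 by lia.
  move: H0; rewrite {1}Hd1 {1}Hs1 /= -Hs1 hornerD hornerM hornerXn => ->.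
  by rewrite mulr0.
-
  try subst s.
  have Hb : (0 < b)%N by nia.
  rewrite (IH j a r.-1 b.-1 d.-1) ?(IH j.+1 a r.-1 b 0%N); try nia.
  rewrite (@qb_gt R r.-1 d.-1); last lia.
  by rewrite horner0 mulr0 add0r expr0 mul1r !qb_m0.
-
  rewrite (IH j a r.-1 b s.-1) ?(IH j.+1 a r.-1 b s); try nia.
  have Hr1 : r = (r.-1).+1 by lia.
  have Hs1 : s = (s.-1).+1 by lia.
  rewrite [in RHS]Hr1 [in RHS]Hs1 /= -Hs1 hornerD hornerM hornerXn; ring.
Qed.

End Z.



Fixpoint qmb (R : fieldType) (I : Type) (r : seq I) (F : I -> nat) : {poly R} :=
  match r with
  | [::] => 1
  | x :: r' => qb R (F x + \sum_(i <- r') F i)%N (F x) * qmb R I r' F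
  end.
Arguments qmb R {I} r F.

Fixpoint nmb (I : Type) (r : seq I) (F : I -> nat) : nat :=
  match r with
  | [::] => 1%N
  | x :: r' => ('C(F x + \sum_(i <- r') F i, F x) * nmb I r' F)%N
  end.
Arguments nmb {I} r F.

Section M.
Variable R : fieldType.

Lemma qmb_fact (I : Type) (r : seq I) F :
  qfact R (\sum_(i <- r) F i)%N = qmb R r F * \prod_(i <- r) qfact R (F i).
Proof.
elim: r => [|x r IH]; first by rewrite !big_nil qfact0 mulr1.
rewrite !big_cons /= (@qb_fact R _ (F x)) ?leq_addr // addKn IH; ring.
Qed.

Lemma nmb_fact (I : Type) (r : seq I) F :
  ((\sum_(i <- r) F i)`! = nmb r F * \prod_(i <- r) (F i)`!)%N.
Proof.
elim: r => [|x r IH]; first by rewrite !big_nil.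
rewrite !big_cons /= -(@bin_fact _ (F x)) ?leq_addr // addKn IH; lia.
Qed.

Lemma qmultinomE n (mu : 'I_n -> nat) :
  qmultinom R (\sum_(i < n) mu i)%N mu = qmb R (index_enum 'I_n) mu.
Proof.
rewrite /qmultinom (@qmb_fact _ (index_enum 'I_n) mu) mulpK //.
rewrite prodf_seq_neq0; apply/allP => i _ /=; exact: qfact_neq0.
Qed.

Lemma multinomnE n (s : 'I_n -> nat) :
  multinomn (\sum_(i < n) s i)%N s = nmb (index_enum 'I_n) s.
Proof.
rewrite /multinomn (@nmb_fact _ (index_enum 'I_n) s) mulnK //.
rewrite prodn_gt0 // => i; exact: fact_gt0.
Qed.

Lemma sum_divmod (I : Type) (r : seq I) F d :
  (\sum_(i <- r) F i = (\sum_(i <- r) (F i %/ d)) * d + \sum_(i <- r) (F i %% d))%N.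
Proof.
elim: r => [|x r IH]; first by rewrite !big_nil.
rewrite !big_cons IH {1}(divn_eq (F x) d); lia.
Qed.

Lemma qmb_one (I : Type) (r : seq I) G :
  (\sum_(i <- r) G i <= 1)%N -> qmb R r G = 1.
Proof.
elim: r => [|x r IH] //=; rewrite big_cons => H.
rewrite IH; last lia.
have [H0|H0] := posnP (G x).
  by rewrite H0 qb_m0 mulr1.
have -> : (\sum_(i <- r) G i = 0)%N by lia.
by rewrite addn0 qb_mm mulr1.
Qed.

Variable d : nat.
Variable z : R.
Hypothesis Hd : (1 < d)%N.
Hypothesis Hz : d.-primitive_root z.

Lemma qmb_res (I : Type) (r : seq I) F :
  (\sum_(i <- r) (F i %% d) < d)%N ->
  (qmb R r F).[z] = (nmb r (fun i => F i %/ d)%N)%:R * (qmb R r (fun i => F i %% d)%N).[z].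
Proof.
elim: r => [|x r IH]; first by rewrite /= hornerC mul1r.
rewrite big_cons /= => H.
rewrite !hornerM IH; last lia.
rewrite (@lucas_gen R d z Hd Hz _ _ (F x %/ d + \sum_(i <- r) (F i %/ d))%N
   (F x %% d + \sum_(i <- r) (F i %% d))%N (F x %/ d) (F x %% d)).
- rewrite natrM; ring.
- done.
- apply: ltn_pmod; lia.
- rewrite (@sum_divmod _ r F d) {1}(divn_eq (F x) d); lia.
- exact: divn_eq.
Qed.

Lemma qmb_nz (I : Type) (r : seq I) F :
  (qmb R r F).[z] != 0 -> (\sum_(i <- r) (F i %% d) < d)%N.
Proof.
elim: r => [|x r IH]; first by rewrite big_nil; lia.
rewrite big_cons /= hornerM mulf_eq0 negb_or => /andP [H1 H2].
have Ht := IH H2.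
have Hm : (F x %% d < d)%N by apply: ltn_pmod; lia.
case: (ltnP (F x %% d + \sum_(i <- r) (F i %% d)) d) => // Hge.
move: H1.
rewrite (@lucas_gen R d z Hd Hz _ _ (F x %/ d + \sum_(i <- r) (F i %/ d)).+1
   (F x %% d + \sum_(i <- r) (F i %% d) - d)%N (F x %/ d) (F x %% d)).
- by rewrite qb_gt ?horner0 ?mulr0 ?eqxx //; lia.
- lia.
- done.
- rewrite (@sum_divmod _ r F d) {1}(divn_eq (F x) d); lia.
- exact: divn_eq.
Qed.

End M.



Lemma a_muE (R : fieldType) n (mu : 'I_n -> nat) (x : R) :
  a_mu mu x = (qb R (n + \sum_(i < n) mu i) (\sum_(i < n) mu i)).[x]
     * (qmb R (index_enum 'I_n) mu).[x] / (qint R n.+1).[x].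
Proof. by rewrite /a_mu qbinomE ?leq_addl // qmultinomE. Qed.

Lemma modE q r d : (r < d)%N -> ((q * d + r) %% d = r)%N.
Proof. by move=> H; rewrite modnMDl modn_small. Qed.

Lemma divE q r d : (r < d)%N -> ((q * d + r) %/ d = q)%N.
Proof. by move=> H; rewrite divnMDl ?divn_small ?addn0 //; lia. Qed.

Theorem lemma2p1 (n : nat) (mu : 'I_n -> nat) (d : nat) (z : algC) :
  (0 < n)%N ->
  n = (\sum_(i < n) i.+1 * mu i)%N ->
  (2 <= d)%N ->
  (d %| n + 2)%N ->
  d.-primitive_root z ->
  let k := (\sum_(i < n) mu i)%N in
  ((exists j : 'I_n, mu j = 1 %[mod d] /\ (forall i : 'I_n, i != j -> mu i = 0 %[mod d])) ->
     a_mu mu z =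
     ('C((n + 2) %/ d + (k - 1) %/ d - 1, (k - 1) %/ d)
        * multinomn ((k - 1) %/ d) (fun i => mu i %/ d))%N%:R)
  /\ (d = 2%N -> (forall i : 'I_n, mu i = 0 %[mod 2]) ->
     a_mu mu z =
     ('C((n + k) %/ 2, k %/ 2) * multinomn (k %/ 2) (fun i => mu i %/ 2))%N%:R)
  /\ (~ (exists j : 'I_n, mu j = 1 %[mod d] /\ (forall i : 'I_n, i != j -> mu i = 0 %[mod d])) ->
      ~ (d = 2%N /\ (forall i : 'I_n, mu i = 0 %[mod 2])) ->
      a_mu mu z = 0).
Proof.
move=> Hn0 Hnsum Hd Hdvd Hz k.
rewrite a_muE -/k.
set S := (\sum_(i < n) (mu i %/ d))%N.
set s := (\sum_(i < n) (mu i %% d))%N.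
have Hks : k = (S * d + s)%N by rewrite /k /S /s (@sum_divmod _ _ _ d).
have Hd0 : (0 < d)%N by lia.
case/dvdnP: Hdvd => p Hp.
have [p' Ep] : exists p', p = p'.+1 by case: p Hp => [|p'] Hp; [lia | exists p'].
subst p.
have Hp' : (n + 2 = d + p' * d)%N by rewrite Hp mulSn.
have Hq : (qint algC n.+1).[z] != 0.
  apply: (@qint_neq0 algC d z Hz n.+1); apply/negP => H.
  have : (d %| (n.+1) + 1)%N by rewrite addn1 -addn2 Hp dvdn_mull.
  by rewrite dvdn_addr // dvdn1; lia.
have HQ : (qint algC n.+1).[z] = (qint algC (d.-1)).[z].
  rewrite (@qint_mod _ _ _ Hd Hz); congr (qint _ _).[_].
  have -> : (n.+1 = p' * d + d.-1)%N by lia.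
  rewrite modE //; lia.
split; [|split].
-
  case=> j [Hj1 Hj0].
  have Hs : s = 1%N.
    rewrite /s (bigD1 j) //= big1 ?addn0.
      by rewrite Hj1 modn_small.
    by move=> i /Hj0 ->; rewrite mod0n.
  have HMV : (qmb algC (index_enum 'I_n) mu).[z] =
      (nmb (index_enum 'I_n) (fun i => mu i %/ d)%N)%:R.
    rewrite (@qmb_res _ _ _ Hd Hz); last by rewrite -/s Hs.
    by rewrite qmb_one ?hornerC ?mulr1 // -/s Hs.
  rewrite HMV HQ.
  rewrite (@lucas_gen _ d z Hd Hz _ _ (p' + S)%N d.-1 S 1%N); try lia.
  rewrite qb_m1.
  have Hk1 : ((k - 1) %/ d = S)%N by rewrite Hks Hs addn1 subn1 /= mulnK.
  have Hn2 : ((n + 2) %/ d = p'.+1)%N by rewrite Hp mulnK.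
  rewrite Hk1 Hn2 /S multinomnE -/S.
  have -> : (p'.+1 + S - 1 = p' + S)%N by lia.
  have Hq' : (qint algC d.-1).[z] != 0 by rewrite -HQ.
  by rewrite natrM mulrAC mulfK // -natrM.
-
  move=> Ed Hev; subst d.
  have Hs : s = 0%N.
    by rewrite /s big1 // => i _; rewrite Hev.
  have HMV : (qmb algC (index_enum 'I_n) mu).[z] =
      (nmb (index_enum 'I_n) (fun i => mu i %/ 2)%N)%:R.
    rewrite (@qmb_res _ _ _ Hd Hz); last by rewrite -/s Hs.
    by rewrite qmb_one ?hornerC ?mulr1 // -/s Hs.
  rewrite HMV HQ /= qint1 hornerC divr1.
  rewrite (@lucas_gen _ 2 z Hd Hz _ _ (p' + S)%N 0%N S 0%N); try lia.
  rewrite qb_m0 hornerC mulr1.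
  have Hk2 : (k %/ 2 = S)%N by rewrite Hks Hs addn0 mulnK.
  have Hnk : ((n + k) %/ 2 = p' + S)%N.
    have -> : (n + k = (p' + S) * 2 + 0)%N by rewrite Hks Hs mulnDl; lia.
    by rewrite divE.
  by rewrite Hk2 Hnk /S multinomnE natrM.
-
  move=> Hna Hnb.
  have [H0|HMV] := eqVneq (qmb algC (index_enum 'I_n) mu).[z] 0.
    by rewrite H0 mulr0 mul0r.
  have Hsd : (s < d)%N by apply: (@qmb_nz _ _ _ Hd Hz _ _ _ HMV).
  have [Hs0|[Hs1|Hs2]] : s = 0%N \/ s = 1%N \/ (2 <= s)%N by lia.
  + exfalso.
    have Hall : forall i : 'I_n, (mu i %% d == 0)%N.
      move=> i; move/eqP: Hs0; rewrite /s sum_nat_eq0 => /forallP /(_ i) //.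
    have Hdn : (d %| n)%N.
      rewrite Hnsum; apply: dvdn_sum => i _; apply: dvdn_mull; exact: Hall.
    have : (d %| 2)%N by rewrite -(dvdn_addr 2 Hdn) Hp dvdn_mull.
    move=> /(dvdn_leq (isT : (0 < 2)%N)) H2.
    have Ed : d = 2%N by lia.
    apply: Hnb; split => // i; subst d; apply/eqP; exact: Hall.
  + exfalso.
    case: (pickP (fun i : 'I_n => (mu i %% d != 0)%N)) => [j Hj | Hnone]; last first.
      move: Hs1; rewrite /s big1 // => i _; by move: (Hnone i) => /= /negbFE /eqP.
    apply: Hna; exists j.
    move: Hs1; rewrite /s (bigD1 j) //= => Hsum.
    have Hj1 : (mu j %% d = 1)%N by move: Hj => /= Hj; lia.
    have Hrest : (\sum_(i < n | i != j) (mu i %% d) == 0)%N by rewrite -(eqn_add2l (mu j %% d)) Hsum Hj1.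
    split; first by rewrite Hj1 modn_small.
    move=> i Hij; move: Hrest; rewrite sum_nat_eq0 => /forallP /(_ i).
    by rewrite Hij /= mod0n => /eqP.
  + rewrite (@lucas_gen _ d z Hd Hz _ _ (p'.+1 + S)%N (s - 2)%N S s); try lia.
    by rewrite qb_gt ?horner0 ?mulr0 ?mul0r //; lia.
Qed.
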